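(* Let $\varphi:[0,\infty)\to(0,\infty)$ be continuous, strictly increasing, with $\varphi(x)\to\infty$ as $x\to\infty$, and rapidly growing: there exist $\varepsilon>0$ and $A>0$ such that $\varphi(x)/x^{1+\varepsilon}$ is increasing on $[A,\infty)$. Let $W(x)=\exp(\varphi(|x|))$ and $A_n=\varphi^{-1}(n)$. Then for all sufficiently large $n\in\mathbb N$, $$\sup_{x\ge A_n}\frac{|T_n(x/A_n)|}{W(x)}\le\frac{2^n}{e^n},$$ where $T_n$ is the Tchebyshev polynomial of the first kind of degree $n$.
   Context: $T_n(x)=\frac12\left((x+\sqrt{x^2-1})^n+(x-\sqrt{x^2-1})^n\right)$. *)

(* Defs.v *)
From HB Require Import structures.
From mathcomp Require Import all_boot all_order all_algebra.
From mathcomp Require Import all_classical all_reals all_analysis.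
Set Implicit Arguments. Unset Strict Implicit. Unset Printing Implicit Defensive.
Import Order.TTheory GRing.Theory Num.Theory.
Local Open Scope ring_scope.

(* Tchebyshev polynomial of the first kind, via the formula of the paper:
   T_n(x) = 1/2 ((x + sqrt(x^2-1))^n + (x - sqrt(x^2-1))^n),
   used here only for x >= 1 (where it is real and equals the usual T_n). *)
Definition chebT {R : realType} (n : nat) (x : R) : R :=
  2^-1 * ((x + Num.sqrt (x ^+ 2 - 1)) ^+ n + (x - Num.sqrt (x ^+ 2 - 1)) ^+ n).

(* Main.v *)
Require Import Defs.
From HB Require Import structures.
From mathcomp Require Import all_boot all_order all_algebra.
From mathcomp Require Import all_classical all_reals all_analysis.
From mathcomp Require Import ring lra.
Import Order.TTheory GRing.Theory Num.Theory.
Import numFieldNormedType.Exports.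
Local Open Scope ring_scope.
Local Open Scope classical_set_scope.

Lemma powle (R : realType) (n : nat) (a b : R) : 0 <= a -> a <= b -> a ^+ n <= b ^+ n.
Proof. by move=> a0 ab; apply: lerXn2r; rewrite // nnegrE (le_trans a0). Qed.

Lemma cheb_bound (R : realType) (n : nat) (t : R) : 1 <= t ->
  `|chebT n t| <= 2 ^+ n * t ^+ n.
Proof.
move=> t1; rewrite /chebT.
set s := Num.sqrt (t ^+ 2 - 1).
have s0 : 0 <= s by apply: sqrtr_ge0.
have s2 : s ^+ 2 = t ^+ 2 - 1 by rewrite sqr_sqrtr // subr_ge0 expr_ge1 // (le_trans ler01).
have st : s <= t by nra.
have a0 : 0 <= t + s by lra.
have b0 : 0 <= t - s by lra.
have ha : (t + s) ^+ n <= (2 * t) ^+ n by apply: (powle _ n) => //; lra.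
have hb : (t - s) ^+ n <= (2 * t) ^+ n by apply: (powle _ n) => //; lra.
rewrite ger0_norm; last by rewrite mulr_ge0 ?invr_ge0 ?addr_ge0 ?exprn_ge0.
rewrite -exprMn; lra.
Qed.

Theorem lemma2 (R : realType) (phi : R -> R) :
  {within [set x : R | 0 <= x], continuous phi} ->
  (forall x : R, 0 <= x -> 0 < phi x) ->
  (forall x y : R, 0 <= x -> x < y -> phi x < phi y) ->
  phi x @[x --> +oo] --> +oo ->
  (exists eps : R, 0 < eps /\ exists A : R, 0 < A /\
     forall x y : R, A <= x -> x <= y ->
       phi x / x `^ (1 + eps) <= phi y / y `^ (1 + eps)) ->
  exists N : nat, forall n : nat, (N <= n)%N ->
    forall An : R, 0 <= An -> phi An = n%:R ->
      forall x : R, An <= x ->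
        `|chebT n (x / An)| / expR (phi `|x|) <= 2 ^+ n / expR n%:R.
Proof.
move=> _ phi_pos phi_inc _ [eps [eps0 [A [A0 Hg]]]].
exists (Num.truncn (phi A)).+1 => n Nn An An0 phiAn x Anx.
have hN : phi A < n%:R.
  apply: (lt_le_trans (truncnS_gt _)); by rewrite ler_nat.
have AAn : A < An.
  rewrite ltNge; apply/negP => AnA.
  have : phi An <= phi A.
    case: (ltgtP An A) AnA => // [h _|-> _]; last by [].
    exact: ltW (phi_inc _ _ An0 h).
  lra.
have An_gt0 : 0 < An by lra.
have x0 : 0 < x by lra.
rewrite (gtr0_norm x0).
set t := x / An.
have t1 : 1 <= t by rewrite /t ler_pdivlMr // mul1r.
have xt : x = t * An by rewrite /t divfK // gt_eqF.
set p := 1 + eps.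
have H := Hg _ _ (ltW AAn) Anx.
rewrite phiAn xt powRM ?(le_trans ler01 t1) ?(ltW An_gt0) // in H.
have P0 : 0 < An `^ p by apply: powR_gt0.
have Q0 : 0 < t `^ p by apply: powR_gt0; lra.
have Hp : n%:R * t `^ p <= phi x.
  move: H; rewrite -xt invfM mulrA ler_pM2r ?invr_gt0 // ler_pdivlMr //.
have tp : t <= t `^ p by apply: le1r_powR => //; rewrite /p; lra.
have n0 : 0 <= n%:R :> R by [].
have Hnt : n%:R * t <= phi x.
  apply: le_trans Hp; exact: ler_wpM2l.
have Ht : t ^+ n <= expR (phi x - n%:R).
  have t0 : 0 <= t by lra.
  have te : t <= expR (t - 1) by have := expR_ge1Dx (t - 1); lra.
  apply: (le_trans (powle _ n _ _ t0 te)).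
  rewrite -expRM_natl ler_expR; lra.
have Hc := cheb_bound _ n _ t1.
have E0 : 0 < expR (phi x) by apply: expR_gt0.
have e0 : 0 < expR (n%:R) :> R by apply: expR_gt0.
rewrite ler_pdivrMr //.
apply: (le_trans Hc).
have -> : 2 ^+ n / expR n%:R * expR (phi x) = 2 ^+ n * expR (phi x - n%:R).
  by rewrite expRB mulrA mulrAC.
apply: ler_wpM2l => //; apply: exprn_ge0; lra.
Qed.
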